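(* Let $m,n\geq 6$ and $r\geq 2$. Then $\varphi(\mathcal{P}^r_{m-5}\cup\mathcal{W}_{n-1},x)=\varphi(\mathcal{P}^r_{n-5}\cup\mathcal{W}_{m-1},x)$.
   Context: The loose path $\mathcal{P}^r_t=v_1e_1v_2\cdots v_te_tv_{t+1}$ of length $t\geq 1$ has edges $e_i=\{v_i,u_{i,1},\dots,u_{i,r-2},v_{i+1}\}$, all listed vertices distinct (for $r=2$ it is the ordinary path with $t$ edges). For $N\geq 5$, $\mathcal{W}_N$ is the $r$-uniform hypergraph obtained from the loose path $\mathcal{P}^r_{N-2}$ (vertices $v_1,\dots,v_{N-1}$) by attaching one pendent edge (an edge containing one existing vertex and $r-1$ new vertices) at $v_2$ and one at $v_{N-2}$. $\cup$ denotes disjoint union. For an $r$-uniform hypergraph $\mathcal{K}$ on $n'$ vertices, $m(\mathcal{K},k)$ is the number of sets of $k$ pairwise disjoint edges ($m(\mathcal{K},0)=1$) and $\varphi(\mathcal{K},x)=\sum_{k\geq0}(-1)^km(\mathcal{K},k)x^{n'-kr}$ is the matching polynomial. *)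

(* Defs.v *)
From mathcomp Require Import all_boot all_order all_algebra.
Set Implicit Arguments. Unset Strict Implicit. Unset Printing Implicit Defensive.
Import GRing.Theory.

Record hgraph := HGraph { hv : nat; he : {set {set 'I_hv}} }.

Definition mkH (n : nat) (es : seq (seq nat)) : hgraph :=
  @HGraph n [set:: map (fun e => [set i : 'I_n | (val i \in e)]) es].

Definition hunion (G1 G2 : hgraph) : hgraph :=
  @HGraph (hv G1 + hv G2)
    ([set (@lshift (hv G1) (hv G2)) @: e | e : {set 'I_(hv G1)} in he G1] :|:
     [set (@rshift (hv G1) (hv G2)) @: e | e : {set 'I_(hv G2)} in he G2]).

(* Loose path P^r_t: vertices 0 .. t(r-1); edge i = {i(r-1), ..., i(r-1)+(r-1)},
   so v_j is vertex (j-1)(r-1) and consecutive edges share exactly one vertex. *)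
Definition loose_edges (r t : nat) : seq (seq nat) :=
  [seq iota (i * r.-1) r | i <- iota 0 t].
Definition loose_path (r t : nat) : hgraph :=
  mkH (t * r.-1).+1 (loose_edges r t).

(* W_N: loose path P^r_(N-2) (path vertices v_1..v_(N-1), v_j = (j-1)(r-1)),
   plus a pendent edge at v_2 and one at v_(N-2), each with r-1 new vertices. *)
Definition W_hyp (r N : nat) : hgraph :=
  let b := ((N - 2) * r.-1).+1 in
  mkH (b + 2 * r.-1)
    (loose_edges r (N - 2) ++
     [:: r.-1 :: iota b r.-1 ;
         ((N - 3) * r.-1) :: iota (b + r.-1) r.-1]).

Definition match_count (G : hgraph) (k : nat) : nat :=
  #|[set S : {set {set 'I_(hv G)}} |
      [&& S \subset he G, #|S| == k &
          [forall e1 in S, forall e2 in S, (e1 != e2) ==> [disjoint e1 & e2]]]]|.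

(* Matching polynomial of an r-uniform hypergraph (k disjoint nonempty edges
   force k <= number of vertices, so the sum over k <= hv G is complete). *)
Definition match_poly (r : nat) (G : hgraph) : {poly int} :=
  (
  \sum_(k < (hv G).+1)
     ((-1) ^+ k * (match_count G k)%:R) *: 'X^(hv G - k * r))%R.

(* Main.v *)
Require Import Defs.
From mathcomp Require Import all_boot all_order all_algebra.
From mathcomp Require Import ring zify.
Set Implicit Arguments. Unset Strict Implicit. Unset Printing Implicit Defensive.
Import GRing.Theory.

Section Gen.
Variable T : finType.
Implicit Types (E A B D S : {set {set T}}) (e f : {set T}).

Definition pdisj S :=
  [forall e1 in S, forall e2 in S, (e1 != e2) ==> [disjoint e1 & e2]].
Definition Mt E := [set S : {set {set T}} | (S \subset E) && pdisj S].
Definition Q E : {poly int} := (\sum_(S in Mt E) 'X^#|S|)%R.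

Lemma pdisjP S : reflect (forall e1 e2, e1 \in S -> e2 \in S -> e1 != e2 -> [disjoint e1 & e2]) (pdisj S).
Proof.
apply: (iffP forall_inP) => [H e1 e2 h1 h2 ne|H e1 h1].
  by move/forall_inP: (H e1 h1) => /(_ e2 h2) /implyP; apply.
by apply/forall_inP => e2 h2; apply/implyP; apply: H.
Qed.

Lemma disjP (a b : {set T}) : reflect (forall x, x \in a -> x \in b -> False) [disjoint a & b].
Proof.
rewrite -setI_eq0; apply: (iffP eqP) => [h x xa xb|h].
  have: x \in a :&: b by rewrite inE xa xb.
  by rewrite h inE.
apply/setP => x; rewrite !inE; apply/negP => /andP [xa xb]; exact: h x xa xb.
Qed.

Lemma Q0 : Q set0 = 1%R.
Proof.
rewrite /Q (_ : Mt set0 = [set set0]) ?big_set1 ?cards0 ?expr0 //.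
apply/setP => S; rewrite !inE subset0; case: eqP => // -> /=.
by apply/pdisjP => e1 e2; rewrite inE.
Qed.

Lemma Q_del E e : e \in E ->
  Q E = (Q (E :\ e) + 'X * Q [set f in E :\ e | [disjoint f & e]])%R.
Proof.
move=> eE; rewrite /Q (bigID (fun S => e \in S)) /= addrC. congr (_ + _)%R.
  apply: eq_bigl => S; rewrite !inE subsetD1; case: (e \in S); rewrite ?andbF ?andbT //.
set D := [set f in E :\ e | [disjoint f & e]].
rewrite (reindex_onto (fun S => e |: S) (fun S => S :\ e)) /=; last first.
  by move=> S /andP [_ eS]; rewrite setD1K.
have key : forall S, e \notin S -> (e |: S \in Mt E) = (S \in Mt D).
  move=> S eS; rewrite !inE; apply/andP/andP => [[sub pd]|[sub pd]]; split.
  - apply/subsetP => f fS; rewrite !inE.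
    have fe : f != e by apply/eqP => h; rewrite -h fS in eS.
    have fE : f \in E by apply: (subsetP sub); rewrite !inE fS orbT.
    rewrite fe fE /=.
    by apply: (pdisjP _ pd) => //; rewrite !inE ?fS ?eqxx ?orbT.
  - by apply/pdisjP => e1 e2 h1 h2; apply: (pdisjP _ pd); rewrite !inE ?h1 ?h2 ?orbT.
  - apply/subsetP => f; rewrite !inE => /orP [/eqP->|fS] //.
    by move/subsetP: sub => /(_ f fS); rewrite !inE => /andP [/andP [_ fE] _].
  - apply/pdisjP => e1 e2; rewrite !inE => /orP [/eqP->|h1] /orP [/eqP->|h2] ne.
    + by rewrite eqxx in ne.
    + by move/subsetP: sub => /(_ e2 h2); rewrite !inE disjoint_sym => /andP [_ ].
    + by move/subsetP: sub => /(_ e1 h1); rewrite !inE => /andP [_ ].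
    + exact: (pdisjP _ pd).
rewrite mulr_sumr.
apply: eq_big => S.
  rewrite setU11 andbT.
  have [eS|eS] := boolP (e \in S).
    have -> : ((e |: S) :\ e == S) = false.
      by apply/eqP => h; move: eS; rewrite -h !inE eqxx.
    rewrite andbF; symmetry; apply/negP; rewrite inE => /andP [/subsetP sub _].
    by move: (sub e eS); rewrite !inE eqxx.
  by rewrite setU1K // eqxx andbT key.
move=> /andP [_ /eqP h].
have eS : e \notin S by apply/negP => eS; move: eS; rewrite -h !inE eqxx.
by rewrite cardsU1 eS add1n exprS.
Qed.

Lemma Q_union A B : (forall a b, a \in A -> b \in B -> [disjoint a & b]) ->
  A :&: B = set0 -> Q (A :|: B) = (Q A * Q B)%R.
Proof.
move: {2}#|A| (leqnn #|A|) => n; elim: n A => [|n IH] A hA hd hI.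
  have -> : A = set0 by apply: cards0_eq; apply/eqP; rewrite -leqn0.
  by rewrite set0U Q0 mul1r.
case: (set_0Vmem A) => [->|[e eA]]; first by rewrite set0U Q0 mul1r.
have eB : e \notin B.
  apply/negP => eB; have: e \in A :&: B by rewrite inE eA eB.
  by rewrite hI inE.
have sub_ok : forall A', A' \subset A -> #|A'| <= n ->
    Q (A' :|: B) = (Q A' * Q B)%R.
  move=> A' sA' cA'; apply: IH => //.
    by move=> a b aA bB; apply: hd => //; apply: (subsetP sA').
  apply/setP => x; rewrite !inE; apply/negP => /andP [xA xB].
  have: x \in A :&: B by rewrite inE (subsetP sA' x xA) xB.
  by rewrite hI inE.
have cD : #|A :\ e| <= n.
  by move: hA; rewrite (cardsD1 e A) eA add1n ltnS.
rewrite (Q_del (e:=e)) ?inE ?eA // (Q_del eA).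
have h1 : (A :|: B) :\ e = (A :\ e) :|: B.
  apply/setP => x; rewrite !inE; case: (x =P e) => [->|] //=.
  by rewrite (negbTE eB).
have h2 : [set f in (A :\ e) :|: B | [disjoint f & e]] =
          [set f in A :\ e | [disjoint f & e]] :|: B.
  apply/setP => x; rewrite !inE; case xB: (x \in B); rewrite ?orbT ?orbF //=.
  by rewrite disjoint_sym hd.
rewrite h1 h2 !sub_ok ?subD1set //.
- by rewrite mulrDl mulrA.
- by apply/subsetP => x; rewrite !inE => /andP [/andP [_ ]].
- apply: leq_trans cD; apply: subset_leq_card.
  by apply/subsetP => x; rewrite !inE => /andP [].
Qed.
End Gen.

Section Img.
Variables (T T' : finType) (h : T -> T').
Hypothesis hinj : injective h.
Let H := fun e : {set T} => h @: e.
Let injH : injective H := imset_inj hinj.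

Lemma disj_img (a b : {set T}) : [disjoint h @: a & h @: b] = [disjoint a & b].
Proof.
rewrite -!setI_eq0 -imsetI ?imset_eq0 //.
by move=> x y _ _; apply: hinj.
Qed.

Lemma pdisj_img (S : {set {set T}}) : pdisj (H @: S) = pdisj S.
Proof.
apply/pdisjP/pdisjP => P.
  move=> e1 e2 h1 h2 ne; rewrite -disj_img; apply: P; rewrite ?imset_f //.
  by rewrite (inj_eq injH).
move=> x1 x2 /imsetP [e1 h1 ->] /imsetP [e2 h2 ->]; rewrite (inj_eq injH) => ne.
by rewrite disj_img; apply: P.
Qed.

Lemma Q_img (E : {set {set T}}) : Q [set h @: e | e : {set T} in E] = Q E.
Proof.
have hM : Mt [set h @: e | e : {set T} in E] = (fun S : {set {set T}} => H @: S) @: Mt E.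
  apply/setP => S'; rewrite inE; apply/andP/imsetP.
    move=> [sub pd]; exists [set e in E | H e \in S'].
      rewrite inE; apply/andP; split.
        by apply/subsetP => e; rewrite inE => /andP [].
      apply/pdisjP => e1 e2; rewrite !inE => /andP [_ h1] /andP [_ h2] ne.
      by rewrite -disj_img; apply: (pdisjP _ pd) => //; rewrite (inj_eq injH).
    apply/setP => x; apply/idP/imsetP => [xS|[e]].
      move: (subsetP sub x xS) => /imsetP [e eE xe].
      by exists e => //; rewrite inE eE /= -?xe ?xS //; move: xS; rewrite xe.
    by rewrite inE => /andP [_ eS] ->.
  move=> [S]; rewrite inE => /andP [sub pd] ->; split.
    exact: imsetS.
  by rewrite pdisj_img.
rewrite /Q hM big_imset.
  by apply: eq_bigr => S _; rewrite card_imset.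
by move=> S1 S2 _ _; apply: imset_inj.
Qed.
End Img.

Lemma mc_coef G k : ((Q (he G))`_k = (match_count G k)%:R)%R.
Proof.
rewrite /Q /match_count coef_sum.
under eq_bigr => S _ do rewrite coefXn.
rewrite -natr_sum; congr (_%:R)%R.
rewrite -sum1_card.
rewrite [RHS](eq_bigl (fun S => (S \in Mt (he G)) && (#|S| == k))); last first.
  move=> S; rewrite !inE /pdisj.
  by case: (S \subset he G) => //=; rewrite andbC.
rewrite big_mkcond [RHS]big_mkcond /=; apply: eq_bigr => S _.
by case: (S \in Mt _) => //=; rewrite eq_sym; case: (#|S| == k).
Qed.

Lemma mp_eq r G1 G2 : hv G1 = hv G2 -> Q (he G1) = Q (he G2) ->
  match_poly r G1 = match_poly r G2.
Proof.
rewrite /match_poly => hv12 hQ; rewrite hv12; apply: eq_bigr => k _.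
by rewrite -!mc_coef hQ.
Qed.

Lemma Q_hunion G1 G2 : set0 \notin he G1 ->
  Q (he (hunion G1 G2)) = (Q (he G1) * Q (he G2))%R.
Proof.
move=> h0; rewrite /hunion /=.
set A := [set _ | _ in he G1]; set B := [set _ | _ in he G2].
have hd : forall a b, a \in A -> b \in B -> [disjoint a & b].
  move=> a b /imsetP [x xE ->] /imsetP [y yE ->].
  apply/disjP => z /imsetP [u _ ->] /imsetP [w _ /(congr1 val)] /= h.
  by have := ltn_ord u; rewrite h ltnNge leq_addr.
rewrite Q_union //.
  by rewrite /A /B !Q_img //; first [exact: lshift_inj | exact: rshift_inj].
apply/setP => z; rewrite !inE; apply/negP => /andP [zA zB].
have := hd z z zA zB; rewrite -setI_eq0 setIid => /eqP z0.
move: zA; rewrite z0 => /imsetP [x xE] /esym /eqP; rewrite imset_eq0 => /eqP x0.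
by rewrite -x0 xE in h0.
Qed.

Lemma Q1 (T : finType) (x : {set T}) : Q [set x] = (1 + 'X)%R.
Proof.
rewrite (Q_del (e:=x)) ?set11 // setDv.
have -> : [set f in (set0 : {set {set T}}) | [disjoint f & x]] = set0.
  by apply/setP => y; rewrite !inE.
by rewrite Q0 mulr1.
Qed.

Fixpoint pp (d : nat) : {poly int} :=
  match d with
  | 0 => 1%R
  | 1 => (1 + 'X)%R
  | (d'.+1 as d1).+1 => (pp d1 + 'X * pp d')%R
  end.

Section Chain.
Variables (T : finType) (e : nat -> {set T}) (N : nat).
Hypothesis Hd : forall i j, i < j < N -> [disjoint e i & e j] = (i.+1 < j).
Hypothesis Hn : forall i j, i < j < N -> e i != e j.

Definition Iv lo d := [set:: map e (iota lo d)].

Lemma IvP lo d x : reflect (exists2 i, lo <= i < lo + d & x = e i) (x \in Iv lo d).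
Proof.
rewrite /Iv inE; apply: (iffP mapP) => [[i]|[i]]; rewrite ?mem_iota => hi ->; by exists i; rewrite ?mem_iota.
Qed.

Lemma e_inj i j : i < N -> j < N -> e i = e j -> i = j.
Proof.
move=> hi hj hij; case: (ltngtP i j) => // h.
  by have := Hn (i:=i) (j:=j); rewrite hij eqxx h hj => /(_ isT).
by have := Hn (i:=j) (j:=i); rewrite hij eqxx h hi => /(_ isT).
Qed.

Lemma Q_Iv_aux : forall d, (forall lo, lo + d <= N -> Q (Iv lo d) = pp d) /\
                (forall lo, lo + d.+1 <= N -> Q (Iv lo d.+1) = pp d.+1).
Proof.
elim=> [|d [IH1 IH2]].
  split=> lo _; first by rewrite /Iv /= set_nil Q0.
  by rewrite /Iv /= set_seq1 Q1.
split=> // lo hlo.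
have xin : e (lo + d.+1) \in Iv lo d.+2.
  by apply/IvP; exists (lo + d.+1) => //; apply/andP; split; lia.
rewrite (Q_del xin).
have -> : Iv lo d.+2 :\ e (lo + d.+1) = Iv lo d.+1.
  apply/setP => y; rewrite in_setD1; apply/andP/IvP.
    move=> [ne /IvP [i hi ye]]; exists i => //.
    have : i != lo + d.+1 by apply/eqP => h; rewrite ye h eqxx in ne.
    lia.
  move=> [i hi ye]; split; last by apply/IvP; exists i => //; lia.
  rewrite ye; apply: Hn; lia.
have -> : [set f in Iv lo d.+1 | [disjoint f & e (lo + d.+1)]] = Iv lo d.
  apply/setP => y; rewrite inE; apply/andP/IvP.
    move=> [/IvP [i hi ye]]; rewrite ye Hd; last by lia.
    by move=> h; exists i => //; lia.
  move=> [i hi ye]; split; first by apply/IvP; exists i => //; lia.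
  by rewrite ye Hd; lia.
rewrite IH1 ?IH2 //; lia.
Qed.

Lemma Q_Iv d lo : lo + d <= N -> Q (Iv lo d) = pp d.
Proof. by case: (Q_Iv_aux d) => H _; apply: H. Qed.

Variables f g : {set T}.
Hypothesis Ha : 3 <= N.
Hypothesis Hfe : forall i, i < N -> [disjoint f & e i] = (1 < i).
Hypothesis Hge : forall i, i < N -> [disjoint g & e i] = (i < N - 2).
Hypothesis Hfg : [disjoint f & g].
Hypothesis Hfn : forall i, i < N -> f != e i.
Hypothesis Hgn : forall i, i < N -> g != e i.
Hypothesis Hfgn : f != g.

Lemma g_notin lo d : lo + d = N -> g \notin Iv lo d.
Proof.
move=> h; apply/negP => /IvP [i hi gi].
by have := Hgn (i:=i); rewrite gi eqxx => /(_ ltac:(lia)).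
Qed.

Lemma f_notin lo d : lo + d = N -> f \notin Iv lo d.
Proof.
move=> h; apply/negP => /IvP [i hi gi].
by have := Hfn (i:=i); rewrite gi eqxx => /(_ ltac:(lia)).
Qed.

Lemma Q_Ivg lo d : lo + d = N ->
  Q (Iv lo d :|: [set g]) = (pp d + 'X * pp (d - 2))%R.
Proof.
move=> hN.
have gin : g \in Iv lo d :|: [set g] by rewrite in_setU set11 orbT.
rewrite (Q_del gin).
have -> : (Iv lo d :|: [set g]) :\ g = Iv lo d.
  apply/setP => y; rewrite in_setD1 in_setU in_set1.
  case: (y =P g) => [->|_] /=; last by rewrite orbF.
  by rewrite (negbTE (g_notin hN)).
have -> : [set x in Iv lo d | [disjoint x & g]] = Iv lo (d - 2).
  apply/setP => y; rewrite inE; apply/andP/IvP.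
    move=> [/IvP [i hi ye]]; rewrite ye disjoint_sym Hge; last by lia.
    by move=> h; exists i => //; lia.
  move=> [i hi ye]; split; first by apply/IvP; exists i => //; lia.
  by rewrite ye disjoint_sym Hge; lia.
by rewrite (Q_Iv (lo := lo)) ?(Q_Iv (lo := lo)) //; lia.
Qed.

Lemma pp_W a : 3 <= a ->
  (pp a + 'X * pp (a - 2) + 'X * (pp (a - 2) + 'X * pp (a - 2 - 2)) =
   (1 + 4%:R * 'X) * pp (a - 2))%R.
Proof.
case: a => [|[|[|a]]] // _.
case: a => [|c]; first by rewrite /=; ring.
rewrite !subSS !subn0 /=; ring.
Qed.

Lemma Q_W : Q (Iv 0 N :|: [set f; g]) = ((1 + 4%:R * 'X) * pp (N - 2))%R.
Proof.
have fin : f \in Iv 0 N :|: [set f; g] by rewrite in_setU in_set2 eqxx orbT.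
rewrite (Q_del fin).
have -> : (Iv 0 N :|: [set f; g]) :\ f = Iv 0 N :|: [set g].
  apply/setP => y; rewrite in_setD1 !in_setU !in_set1.
  case: (y =P f) => [->|_] /=; last by [].
  by rewrite (negbTE (f_notin (lo:=0) (d:=N) erefl)) (negbTE Hfgn).
have -> : [set x in Iv 0 N :|: [set g] | [disjoint x & f]] = Iv 2 (N - 2) :|: [set g].
  apply/setP => y; rewrite inE !in_setU !in_set1.
  case: (y =P g) => [->|_] /=; first by rewrite !orbT disjoint_sym.
  rewrite !orbF; apply/andP/IvP.
    move=> [/IvP [i hi ye]]; rewrite ye disjoint_sym Hfe; last by lia.
    by move=> h; exists i => //; lia.
  move=> [i hi ye]; split; first by apply/IvP; exists i => //; lia.
  by rewrite ye disjoint_sym Hfe; lia.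
rewrite (Q_Ivg (lo := 0) (d := N)) // (Q_Ivg (lo := 2) (d := N - 2)); last by lia.
by rewrite -pp_W.
Qed.
End Chain.

Definition toS n (l : seq nat) : {set 'I_n} := [set i : 'I_n | val i \in l].

Lemma toS_disjT n l1 l2 : (forall v, v \in l1 -> v \in l2 -> False) ->
  [disjoint toS n l1 & toS n l2].
Proof. by move=> H; apply/disjP => x; rewrite !inE; apply: H. Qed.

Lemma toS_disjF n l1 l2 v : v < n -> v \in l1 -> v \in l2 ->
  [disjoint toS n l1 & toS n l2] = false.
Proof.
move=> vn h1 h2; apply/negP => /disjP H; apply: (H (Ordinal vn)); by rewrite inE.
Qed.

Lemma toS_neq n l1 l2 v : v < n -> v \in l1 -> v \notin l2 -> toS n l1 != toS n l2.
Proof.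
move=> vn h1 h2; apply/negP => /eqP h.
have : Ordinal vn \in toS n l1 by rewrite inE.
by rewrite h inE (negbTE h2).
Qed.

Definition ep r n i := toS n (iota (i * r.-1) r).

Lemma mulk_lt i j k : i < j -> i * k + k <= j * k.
Proof. by move=> h; rewrite addnC -mulSn leq_mul2r h orbT. Qed.

Lemma path_Hd r t n i j : 2 <= r -> t * r.-1 < n -> i < j < t ->
  [disjoint ep r n i & ep r n j] = (i.+1 < j).
Proof.
move=> hr hn /andP [hij hjt]; set k := r.-1.
have rk : r = k.+1 by rewrite /k; lia.
have h1 := mulk_lt k hij; have h2 := mulk_lt k hjt.
case: (ltnP i.+1 j) => h.
  have h3 := mulk_lt k h.
  apply: toS_disjT => v; rewrite !mem_iota; rewrite -/k. lia.
have ej : j = i.+1 by lia.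
apply: (toS_disjF (v := j * k)); rewrite ?mem_iota -/k ?ej ?mulSn; lia.
Qed.

Lemma path_Hn r t n i j : 2 <= r -> t * r.-1 < n -> i < j < t ->
  ep r n i != ep r n j.
Proof.
move=> hr hn /andP [hij hjt]; set k := r.-1.
have rk : r = k.+1 by rewrite /k; lia.
have h1 := mulk_lt k hij; have h2 := mulk_lt k hjt.
apply: (toS_neq (v := i * k)); rewrite ?mem_iota -/k; lia.
Qed.

Lemma he_path r t : he (loose_path r t) = Iv (ep r (t * r.-1).+1) 0 t.
Proof. by rewrite /loose_path /mkH /loose_edges /Iv /= -map_comp. Qed.

Lemma Q_path r t : 2 <= r -> Q (he (loose_path r t)) = pp t.
Proof.
move=> hr; rewrite he_path (Q_Iv (N := t)) //.
  by move=> i j hij; apply: (path_Hd (t := t)).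
by move=> i j hij; apply: (path_Hn (t := t)).
Qed.

Lemma path_no0 r t : 2 <= r -> set0 \notin he (loose_path r t).
Proof.
move=> hr; rewrite he_path; apply/negP => /IvP [i hi /esym /eqP].
set k := r.-1; have rk : r = k.+1 by rewrite /k; lia.
have ht : i * k + k <= t * k by apply: mulk_lt; lia.
have hv : i * k < (t * k).+1 by lia.
move=> h; have : Ordinal hv \in ep r (t * k).+1 i.
  by rewrite inE /= mem_iota -/k; apply/andP; split; lia.
by rewrite (eqP h) inE.
Qed.

Lemma Q_Wh r N : 2 <= r -> 5 <= N ->
  Q (he (W_hyp r N)) = ((1 + 4%:R * 'X) * pp (N - 4))%R.
Proof.
move=> hr hN.
set k := r.-1; have rk : r = k.+1 by rewrite /k; lia.
set a := N - 2; set c := N - 3.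
set b := (a * k).+1; set n := b + 2 * k.
set f := toS n (k :: iota b k).
set g := toS n (c * k :: iota (b + k) k).
have heW : he (W_hyp r N) = Iv (ep r n) 0 a :|: [set f; g].
  rewrite /W_hyp /mkH /=; apply/setP => y.
  rewrite /Iv !inE map_cat mem_cat -map_comp !inE. done.
have hn : hv (W_hyp r N) = n by [].
have ac : a = c.+1 by rewrite /a /c; lia.
have eA : a * k = c * k + k by rewrite ac mulSn addnC.
have c2 : 1 * k + k <= c * k by apply: mulk_lt; lia.
rewrite mul1n in c2.
rewrite heW (Q_W (N := a)).
- by rewrite /a -subnDA.
- move=> i j hij; apply: (path_Hd (t := a)) => //; change (a * k < n); rewrite /n /b; lia.
- move=> i j hij; apply: (path_Hn (t := a)) => //; change (a * k < n); rewrite /n /b; lia.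
- by rewrite /a; lia.
- move=> i hi; case: (ltnP 1 i) => h.
    have h1 : 1 * k + k <= i * k by apply: mulk_lt.
    have h2 : i * k + k <= a * k by apply: mulk_lt.
    rewrite mul1n in h1.
    apply: toS_disjT => v; rewrite in_cons !mem_iota => /orP [/eqP ->|]; lia.
  apply: (toS_disjF (v := k)); rewrite ?mem_iota ?mem_head //; first by rewrite hn /n /b; lia.
  by case: i hi h => [|[|]] //= _ _; lia.
- move=> i hi; have h2 : i * k + k <= a * k by apply: mulk_lt.
  case: (ltnP i (a - 2)) => h.
    have h1 : i.+1 * k + k <= c * k by apply: mulk_lt; lia.
    rewrite mulSn in h1.
    apply: toS_disjT => v; rewrite in_cons !mem_iota => /orP [/eqP ->|]; lia.
  apply: (toS_disjF (v := c * k)); rewrite ?mem_iota ?mem_head //.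
    by rewrite hn /n /b; lia.
  have [->|ic] : i = c \/ c = i.+1 by lia.
    by lia.
  by rewrite ic mulSn; lia.
- apply: toS_disjT => v; rewrite !in_cons !mem_iota.
  by move=> /orP [/eqP ->|h1] /orP [/eqP h2|]; rewrite /b; lia.
- move=> i hi; have h2 : i * k + k <= a * k by apply: mulk_lt.
  apply: (toS_neq (v := b)); rewrite ?in_cons ?mem_iota.
  + by rewrite hn /n /b; lia.
  + by apply/orP; right; rewrite /b; lia.
  + by rewrite /b; lia.
- move=> i hi; have h2 : i * k + k <= a * k by apply: mulk_lt.
  apply: (toS_neq (v := b + k)); rewrite ?in_cons ?mem_iota.
  + by rewrite hn /n /b; lia.
  + by apply/orP; right; rewrite /b; lia.
  + by rewrite /b; lia.
- apply: (toS_neq (v := b)); rewrite ?in_cons ?mem_iota.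
  + by rewrite hn /n /b; lia.
  + by apply/orP; right; rewrite /b; lia.
  + by rewrite /b; lia.
Qed.

Theorem lemma10 (m n r : nat) :
  (6 <= m)%N -> (6 <= n)%N -> (2 <= r)%N ->
  match_poly r (hunion (loose_path r (m - 5)) (W_hyp r (n - 1))) =
  match_poly r (hunion (loose_path r (n - 5)) (W_hyp r (m - 1))).
Proof.
move=> hm hn hr; apply: mp_eq.
  rewrite /=; set k := r.-1.
  have e1 : (n - 1 - 2) * k = (n - 5) * k + 2 * k.
    by rewrite -mulnDl; congr (_ * _); lia.
  have e2 : (m - 1 - 2) * k = (m - 5) * k + 2 * k.
    by rewrite -mulnDl; congr (_ * _); lia.
  rewrite e1 e2; lia.
rewrite !Q_hunion ?path_no0 // !Q_path // !Q_Wh //; try lia.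
rewrite (_ : n - 1 - 4 = n - 5); last by lia.
rewrite (_ : m - 1 - 4 = m - 5); last by lia.
by rewrite mulrCA [in RHS]mulrCA mulrC [in RHS]mulrC; ring.
Qed.
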